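(* Consider the action of the translation subgroup $\mathbb{R}^3\subset SE(3)$ on $\mathbb{R}^6$ with coordinates $(\boldsymbol{\omega},\mathbf{v})=(\omega_1,\omega_2,\omega_3,v_1,v_2,v_3)$ given by $\mathbf{r}\cdot(\boldsymbol{\omega},\mathbf{v})=(\boldsymbol{\omega},\ \mathbf{r}\times\boldsymbol{\omega}+\mathbf{v})$. Then $\{\omega_1,\omega_2,\omega_3,\ \boldsymbol{\omega}\cdot\mathbf{v}\}$ is a SAGBI basis, with respect to the lexicographic order $\omega_1>\omega_2>\omega_3>v_1>v_2>v_3$, for the algebra $\mathbb{R}[\omega_1,\dots,v_3]^{\mathbb{R}^3}$ of polynomials invariant under this action; in particular it generates that algebra.
   Context: A SAGBI basis of a subalgebra $A$ of a polynomial ring, with respect to a term order, is a subset $S\subseteq A$ such that the leading monomial of every nonzero $f\in A$ is a product of leading monomials of elements of $S$. *)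

(* Defs.v *)
(* Multivariate polynomials are not available as a library,
   so R[w1,w2,w3,v1,v2,v3] is modelled as the iterated univariate polynomial
   ring R[v3][v2][v1][w3][w2][w1] (outermost variable = w1). *)
From HB Require Import structures.
From mathcomp Require Import all_boot all_order all_algebra.
Set Implicit Arguments. Unset Strict Implicit. Unset Printing Implicit Defensive.
Import Order.TTheory GRing.Theory Num.Theory.
Local Open Scope ring_scope.

Section SE3.
Variable R : realFieldType.

Definition T1 := {poly R}.
Definition T2 := {poly T1}.
Definition T3 := {poly T2}.
Definition T4 := {poly T3}.
Definition T5 := {poly T4}.
Definition P6 := {poly T5}.

Definition Xw1 : P6 := 'X.
Definition Xw2 : P6 := ('X : T5)%:P.
Definition Xw3 : P6 := ('X : T4)%:P%:P.
Definition Xv1 : P6 := ('X : T3)%:P%:P%:P.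
Definition Xv2 : P6 := ('X : T2)%:P%:P%:P%:P.
Definition Xv3 : P6 := ('X : T1)%:P%:P%:P%:P%:P.

Definition Xwv : P6 := Xw1 * Xv1 + Xw2 * Xv2 + Xw3 * Xv3.

(* evaluation of p at (a1,a2,a3,b1,b2,b3) = (w1,w2,w3,v1,v2,v3) *)
Definition ev (p : P6) (a1 a2 a3 b1 b2 b3 : R) : R :=
  ((((( p.[(a1 : R)%:P%:P%:P%:P%:P : T5] ).[(a2 : R)%:P%:P%:P%:P : T4])
      .[(a3 : R)%:P%:P%:P : T3]).[(b1 : R)%:P%:P : T2]).[(b2 : R)%:P : T1]).[b3].

(* invariance under the translation action r.(w,v) = (w, r x w + v) *)
Definition translation_invariant (p : P6) : Prop :=
  forall r1 r2 r3 a1 a2 a3 b1 b2 b3 : R,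
    ev p a1 a2 a3 (r2 * a3 - r3 * a2 + b1) (r3 * a1 - r1 * a3 + b2)
         (r1 * a2 - r2 * a1 + b3)
    = ev p a1 a2 a3 b1 b2 b3.

(* monomials: exponent vectors [:: e_w1; e_w2; e_w3; e_v1; e_v2; e_v3] *)
Definition lmS (A : nzRingType) (lmA : A -> seq nat) (p : {poly A}) : seq nat :=
  (size p).-1 :: lmA (lead_coef p).
Definition lm0 (_ : R) : seq nat := [::].
Definition lm1 : T1 -> seq nat := lmS lm0.
Definition lm2 : T2 -> seq nat := lmS lm1.
Definition lm3 : T3 -> seq nat := lmS lm2.
Definition lm4 : T4 -> seq nat := lmS lm3.
Definition lm5 : T5 -> seq nat := lmS lm4.
(* leading monomial for lex order w1 > w2 > w3 > v1 > v2 > v3 *)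
Definition lm : P6 -> seq nat := lmS lm5.

Definition mmul (s t : seq nat) : seq nat := map (fun x => x.1 + x.2) (zip s t).
Definition mone : seq nat := nseq 6 0.

Definition sagbi_basis (A : P6 -> Prop) (S : seq P6) : Prop :=
  (forall s, s \in S -> A s) /\
  (forall f, A f -> f != 0 ->
     exists ks : seq P6, all (fun k => k \in S) ks /\
       lm f = foldr mmul mone (map lm ks)).

Inductive generated (S : seq P6) : P6 -> Prop :=
| gen_const c : generated S (c%:P%:P%:P%:P%:P%:P)
| gen_elem s : s \in S -> generated S s
| gen_add p q : generated S p -> generated S q -> generated S (p + q)
| gen_mul p q : generated S p -> generated S q -> generated S (p * q).

End SE3.

(* Main.v *)
Require Import Defs.
From HB Require Import structures.
From mathcomp Require Import all_boot all_order all_algebra.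
Set Implicit Arguments. Unset Strict Implicit. Unset Printing Implicit Defensive.
Import Order.TTheory GRing.Theory Num.Theory.
From mathcomp Require Import ring.
Local Open Scope ring_scope.
Section Gen.
Variable R : realFieldType.

Lemma rmorph_ext1 (A : nzSemiRingType) (S : pzSemiRingType) (f g : {rmorphism {poly A} -> S}) :
  (forall a, f a%:P = g a%:P) -> f 'X = g 'X -> forall p, f p = g p.
Proof.
move=> Hc HX; elim/poly_ind => [|p c IH]; first by rewrite !rmorph0.
by rewrite !rmorphD !rmorphM IH HX Hc.
Qed.

Lemma poly_R_eq (p q : {poly R}) : (forall c, c != 0 -> p.[c] = q.[c]) -> p = q.
Proof.
move=> H; apply/eqP; rewrite -subr_eq0; apply/eqP.
set r := p - q.
have Hr : forall c, c != 0 -> r.[c] = 0 by move=> c /H; rewrite /r hornerD hornerN => ->; rewrite subrr.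
apply/eqP; apply: contraT => nq.
have := max_poly_roots nq (rs := [seq i.+1%:R | i <- iota 0 (size r)]).
rewrite size_map size_iota ltnn; apply.
  by apply/allP => x /mapP [i _ ->]; apply/rootP; apply: Hr; rewrite pnatr_eq0.
rewrite map_inj_uniq ?iota_uniq //.
by move=> i j /eqP; rewrite eqr_nat => /eqP [].
Qed.

Definition Einj (n : nat) (A : pzSemiRingType) (E : seq R -> {rmorphism A -> R}) :=
  forall a b : A, (forall e, size e = n -> E e a = E e b) -> a = b.

Section Step.
Variables (A : nzSemiRingType) (E : seq R -> {rmorphism A -> R}).
Definition cfu_of (e : seq R) : commr_rmorph (E (behead e)) (head 0 e) :=
  fun x => mulrC _ _.
Definition Estep (e : seq R) : {rmorphism {poly A} -> R} :=
  horner_morph (cfu_of e).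
Lemma EstepE c e p : Estep (c :: e) p = (map_poly (E e) p).[c].
Proof. by []. Qed.
Lemma EstepC e a : Estep e a%:P = E (behead e) a.
Proof. exact: horner_morphC. Qed.
Lemma EstepX e : Estep e 'X = head 0 e.
Proof. exact: horner_morphX. Qed.
Lemma Estep_inj n : Einj n E -> forall p q : {poly A},
  (forall c e, size e = n -> c != 0 -> Estep (c :: e) p = Estep (c :: e) q) -> p = q.
Proof.
move=> Ei p q H; apply/polyP => i; apply: Ei => e se.
have: map_poly (E e) p = map_poly (E e) q.
  by apply: poly_R_eq => c nc; rewrite -!EstepE; apply: H.
move=> Heq; have := congr1 (fun r : {poly R} => r`_i) Heq; by rewrite /= !coef_map.
Qed.
Lemma Estep_inj' n : Einj n E -> Einj n.+1 Estep.
Proof.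
move=> Ei p q H; apply: (Estep_inj Ei) => c e se _; apply: H; by rewrite /= se.
Qed.
End Step.

Definition E0 : seq R -> {rmorphism R -> R} := fun _ => (idfun : {rmorphism R -> R}).
Lemma E0_inj : Einj 0 E0.
Proof. by move=> a b /(_ [::] erefl). Qed.
End Gen.

Section Towers.
Variable R : realFieldType.
Local Notation P := (P6 R).

Lemma Estep_horner (A : nzSemiRingType) (E : seq R -> {rmorphism A -> R}) c e (x : A) p :
  E e x = c -> Estep E (c :: e) p = E e (p.[x]).
Proof. by move=> <-; rewrite EstepE horner_map. Qed.

Definition E1 := Estep (A := R) (@E0 R).
Definition E2 := Estep (A := T1 R) E1.
Definition E3 := Estep (A := T2 R) E2.
Definition E4 := Estep (A := T3 R) E3.
Definition E5 := Estep (A := T4 R) E4.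
Definition E6 := Estep (A := T5 R) E5.

Lemma E6_inj : Einj 6 E6.
Proof.
by do 6! apply: Estep_inj'; exact: (@E0_inj R).
Qed.

Lemma E1C e c : E1 e c%:P = c. Proof. by rewrite /E1 EstepC. Qed.
Lemma E2C e c : E2 e c%:P%:P = c. Proof. by rewrite /E2 EstepC E1C. Qed.
Lemma E3C e c : E3 e c%:P%:P%:P = c. Proof. by rewrite /E3 EstepC E2C. Qed.
Lemma E4C e c : E4 e c%:P%:P%:P%:P = c. Proof. by rewrite /E4 EstepC E3C. Qed.
Lemma E5C e c : E5 e c%:P%:P%:P%:P%:P = c. Proof. by rewrite /E5 EstepC E4C. Qed.
Lemma E6C e c : E6 e c%:P%:P%:P%:P%:P%:P = c. Proof. by rewrite /E6 EstepC E5C. Qed.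

Lemma evE p a1 a2 a3 b1 b2 b3 :
  ev p a1 a2 a3 b1 b2 b3 = E6 [:: a1; a2; a3; b1; b2; b3] p.
Proof.
rewrite /E6 (Estep_horner _ (E5C _ _)).
rewrite /E5 (Estep_horner _ (E4C _ _)).
rewrite /E4 (Estep_horner _ (E3C _ _)).
rewrite /E3 (Estep_horner _ (E2C _ _)).
rewrite /E2 (Estep_horner _ (E1C _ _)).
by rewrite /E1 (Estep_horner (x := b3)).
Qed.
End Towers.

Definition WF1 (R : realFieldType) := {poly R}.
HB.instance Definition _ (R : realFieldType) := GRing.IntegralDomain.on (WF1 R).
Definition WF2 (R : realFieldType) := {poly WF1 R}.
HB.instance Definition _ (R : realFieldType) := GRing.IntegralDomain.on (WF2 R).
Definition WW (R : realFieldType) := {poly WF2 R}.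
HB.instance Definition _ (R : realFieldType) := GRing.IntegralDomain.on (WW R).
Definition WQ (R : realFieldType) := {poly WW R}.
HB.instance Definition _ (R : realFieldType) := GRing.IntegralDomain.on (WQ R).

Section WTower.
Variable R : realFieldType.
Local Notation P := (P6 R).
Local Notation W := (WW R).

Definition EW1 : seq R -> {rmorphism WF1 R -> R} := Estep (A := R) (@E0 R).
Definition EW2 : seq R -> {rmorphism WF2 R -> R} := Estep (A := WF1 R) EW1.
Definition EW3 : seq R -> {rmorphism W -> R} := Estep (A := WF2 R) EW2.
Lemma EW3_inj : Einj 3 EW3.
Proof. by do 3! apply: Estep_inj'; exact: (@E0_inj R). Time Qed.
Lemma EW3C e c : EW3 e c%:P%:P%:P = c.
Proof. by rewrite /EW3 EstepC /EW2 EstepC /EW1 EstepC. Time Qed.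

Definition iota3 : {rmorphism R -> T3 R} := (@polyC (T2 R) \o @polyC (T1 R) \o @polyC R)%FUN.
Definition iota4 : {rmorphism WF1 R -> T4 R} := map_poly iota3.
Definition iota5 : {rmorphism WF2 R -> T5 R} := map_poly iota4.
Definition iotaW : {rmorphism W -> P} := map_poly iota5.

Definition smorph (A S : pzSemiRingType) (f : A -> S) :=
  [/\ forall x y, f (x + y) = f x + f y, forall x y, f (x * y) = f x * f y & f 0 = 0].

Lemma ext1 (A : nzSemiRingType) (S : pzSemiRingType) (f g : {poly A} -> S) :
  smorph f -> smorph g -> (forall a, f a%:P = g a%:P) -> f 'X = g 'X -> forall p, f p = g p.
Proof.
move=> [fD fM f0] [gD gM g0] Hc HX; elim/poly_ind => [|p c IH]; first by rewrite f0 g0.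
by rewrite fD gD fM gM IH HX Hc.
Qed.

Lemma smorphC (A : nzSemiRingType) (S : pzSemiRingType) (f : {poly A} -> S) :
  smorph f -> smorph (fun a : A => f a%:P).
Proof.
move=> [fD fM f0]; split => [x y|x y|] /=; by rewrite ?polyCD ?polyCM ?fD ?fM ?f0.
Qed.

Lemma smorph_of (A S : pzSemiRingType) (f : {rmorphism A -> S}) : smorph f.
Proof. by split => [x y|x y|]; rewrite ?rmorphD ?rmorphM ?rmorph0. Qed.

Lemma ext_W (S : pzSemiRingType) (f g : W -> S) : smorph f -> smorph g ->
  (forall c : R, f (c%:P%:P%:P) = g (c%:P%:P%:P)) ->
  f 'X = g 'X -> f ('X : WF2 R)%:P = g ('X : WF2 R)%:P ->
  f ('X : WF1 R)%:P%:P = g ('X : WF1 R)%:P%:P ->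
  forall p, f p = g p.
Proof.
move=> sf sg Hc H1 H2 H3.
apply: (ext1 sf sg _ H1) => a.
move: (smorphC sf) (smorphC sg) => sf2 sg2.
apply: (ext1 sf2 sg2 _ H2) => {}a.
move: (smorphC sf2) (smorphC sg2) => sf1 sg1.
exact: (ext1 sf1 sg1 Hc H3).
Qed.

Lemma ext_P (S : pzSemiRingType) (f g : P -> S) : smorph f -> smorph g ->
  (forall c : R, f (c%:P%:P%:P%:P%:P%:P) = g (c%:P%:P%:P%:P%:P%:P)) ->
  f (Xw1 R) = g (Xw1 R) -> f (Xw2 R) = g (Xw2 R) -> f (Xw3 R) = g (Xw3 R) ->
  f (Xv1 R) = g (Xv1 R) -> f (Xv2 R) = g (Xv2 R) -> f (Xv3 R) = g (Xv3 R) ->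
  forall p, f p = g p.
Proof.
move=> sf sg Hc H1 H2 H3 H4 H5 H6.
apply: (ext1 sf sg _ H1) => a.
move: (smorphC sf) (smorphC sg) => sf5 sg5.
apply: (ext1 sf5 sg5 _ H2) => {}a.
move: (smorphC sf5) (smorphC sg5) => sf4 sg4.
apply: (ext1 sf4 sg4 _ H3) => {}a.
move: (smorphC sf4) (smorphC sg4) => sf3 sg3.
apply: (ext1 sf3 sg3 _ H4) => {}a.
move: (smorphC sf3) (smorphC sg3) => sf2 sg2.
apply: (ext1 sf2 sg2 _ H5) => {}a.
move: (smorphC sf2) (smorphC sg2) => sf1 sg1.
exact: (ext1 sf1 sg1 Hc H6).
Qed.

End WTower.

Section D.
Variable R : realFieldType.
Local Notation P := (P6 R).
Local Notation W := (WW R).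
Lemma mapC (A B : nzSemiRingType) (f : {rmorphism A -> B}) a : map_poly f a%:P = (f a)%:P.
Proof. exact: map_polyC. Qed.
Lemma mapX (A B : nzSemiRingType) (f : {rmorphism A -> B}) : map_poly f 'X = 'X.
Proof. exact: map_polyX. Qed.
Lemma iotaWE q : iotaW R q = map_poly (iota5 R) q. Proof. by []. Qed.
Lemma iota5E q : iota5 R q = map_poly (iota4 R) q. Proof. by []. Qed.
Lemma iota4E q : iota4 R q = map_poly (iota3 R) q. Proof. by []. Qed.
Lemma iota3E c : iota3 R c = c%:P%:P%:P. Proof. by []. Qed.
Lemma iotaW_C c : iotaW R (c%:P%:P%:P) = c%:P%:P%:P%:P%:P%:P.
Proof. by rewrite iotaWE mapC iota5E mapC iota4E mapC iota3E. Qed.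
Lemma iotaW_X1 : iotaW R 'X = Xw1 R.
Proof. by rewrite iotaWE mapX. Qed.
Lemma iotaW_X2 : iotaW R ('X : WF2 R)%:P = Xw2 R.
Proof. by rewrite iotaWE mapC iota5E mapX. Qed.
Lemma iotaW_X3 : iotaW R ('X : WF1 R)%:P%:P = Xw3 R.
Proof. by rewrite iotaWE mapC iota5E mapC iota4E mapX. Qed.

Lemma E6_Xw1 e : E6 e (Xw1 R) = head 0 e. Proof. exact: EstepX. Qed.
Lemma E6_Xw2 e : E6 e (Xw2 R) = head 0 (behead e).
Proof. by rewrite /E6 EstepC /E5 EstepX. Qed.
Lemma E6_Xw3 e : E6 e (Xw3 R) = head 0 (behead (behead e)).
Proof. by rewrite /E6 EstepC /E5 EstepC /E4 EstepX. Qed.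
Lemma E6_Xv1 e : E6 e (Xv1 R) = nth 0 e 3.
Proof. by rewrite /E6 EstepC /E5 EstepC /E4 EstepC /E3 EstepX; case: e => [|? [|? [|? []]]]. Qed.
Lemma E6_Xv2 e : E6 e (Xv2 R) = nth 0 e 4.
Proof. by rewrite /E6 EstepC /E5 EstepC /E4 EstepC /E3 EstepC /E2 EstepX; case: e => [|? [|? [|? [|? []]]]]. Qed.
Lemma E6_Xv3 e : E6 e (Xv3 R) = nth 0 e 5.
Proof. by rewrite /E6 EstepC /E5 EstepC /E4 EstepC /E3 EstepC /E2 EstepC /E1 EstepX; case: e => [|? [|? [|? [|? [|? []]]]]]. Qed.

Lemma E6_iota q a1 a2 a3 b : E6 [:: a1, a2, a3 & b] (iotaW R q) = EW3 [:: a1; a2; a3] q.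
Proof.
pose f := fun q => E6 [:: a1, a2, a3 & b] (iotaW R q).
change (f q = EW3 [:: a1; a2; a3] q).
have sf : smorph f by split => [x y|x y|]; rewrite /f ?rmorphD ?rmorphM ?rmorph0.
apply: (ext_W sf (smorph_of _)) => [c|||] {q}; rewrite /f.
- by rewrite iotaW_C E6C EW3C.
- by rewrite iotaW_X1 E6_Xw1 /EW3 EstepX.
- by rewrite iotaW_X2 E6_Xw2 /EW3 EstepC /EW2 EstepX.
- by rewrite iotaW_X3 E6_Xw3 /EW3 EstepC /EW2 EstepC /EW1 EstepX.
Qed.
End D.

Definition hm (A : nzSemiRingType) (S : comNzSemiRingType) (k : {rmorphism A -> S}) (u : S) :
  {rmorphism {poly A} -> S} := horner_morph (fun x => mulrC u (k x)).
Lemma hmC (A : nzSemiRingType) (S : comNzSemiRingType) (k : {rmorphism A -> S}) u a :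
  hm k u a%:P = k a.
Proof. exact: horner_morphC. Qed.
Lemma hmX (A : nzSemiRingType) (S : comNzSemiRingType) (k : {rmorphism A -> S}) u :
  hm k u 'X = u.
Proof. exact: horner_morphX. Qed.

Section E.
Variable R : realFieldType.
Local Notation P := (P6 R).
Local Notation W := (WW R).
Local Notation Q := (WQ R).

Definition kap0 : {rmorphism R -> Q} :=
  (@polyC W \o @polyC (WF2 R) \o @polyC (WF1 R) \o @polyC R)%FUN.
Lemma kap0E c : kap0 c = c%:P%:P%:P%:P. Proof. by []. Qed.
Definition qw1 : Q := ('X : W)%:P.
Definition qw2 : Q := (('X : WF2 R)%:P : W)%:P.
Definition qw3 : Q := (('X : WF1 R)%:P%:P : W)%:P.
Definition phi (x1 x2 x3 : Q) : {rmorphism P -> Q} :=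
  hm (A := T5 R) (hm (A := T4 R) (hm (A := T3 R) (hm (A := T2 R) (hm (A := T1 R)
     (hm (A := R) kap0 x3) x2) x1) qw3) qw2) qw1.

Lemma phi_ev (x1 x2 x3 : Q) a1 a2 a3 b1 b2 b3 y :
  (map_poly (EW3 [:: a1; a2; a3]) x1).[y] = b1 ->
  (map_poly (EW3 [:: a1; a2; a3]) x2).[y] = b2 ->
  (map_poly (EW3 [:: a1; a2; a3]) x3).[y] = b3 ->
  forall p, E6 [:: a1; a2; a3; b1; b2; b3] p =
            (map_poly (EW3 [:: a1; a2; a3]) (phi x1 x2 x3 p)).[y].
Proof.
move=> h1 h2 h3; apply: ext_P.
- exact: smorph_of.
- by split => [p q|p q|]; rewrite ?rmorphD ?rmorphM ?rmorph0 ?hornerD ?hornerM ?horner0.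
- by move=> c; rewrite E6C /phi !hmC kap0E mapC EW3C hornerC.
- by rewrite E6_Xw1 /phi hmX /qw1 mapC /EW3 EstepX hornerC.
- by rewrite E6_Xw2 /phi hmC hmX /qw2 mapC /EW3 EstepC /EW2 EstepX hornerC.
- by rewrite E6_Xw3 /phi !hmC hmX /qw3 mapC /EW3 EstepC /EW2 EstepC /EW1 EstepX hornerC.
- by rewrite E6_Xv1 /phi !hmC hmX.
- by rewrite E6_Xv2 /phi !hmC hmX.
- by rewrite E6_Xv3 /phi !hmC hmX.
Qed.
End E.

Section F.
Variable R : realFieldType.
Local Notation P := (P6 R).
Local Notation W := (WW R).
Local Notation Q := (WQ R).

Lemma f_Xwv (S : pzSemiRingType) (f : {rmorphism P -> S}) :
  f (Xwv R) = f (Xw1 R) * f (Xv1 R) + f (Xw2 R) * f (Xv2 R) + f (Xw3 R) * f (Xv3 R).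
Proof.
exact: (etrans (rmorphD f _ _) (congr2 _ (etrans (rmorphD f _ _)
  (congr2 _ (rmorphM f _ _) (rmorphM f _ _))) (rmorphM f _ _))).
Qed.

Lemma f_sum (S : comPzSemiRingType) (f : {rmorphism P -> S}) (u : nat -> P) (x : P) N :
  f (\sum_(k < N) u k * x ^+ k) = \sum_(k < N) f (u k) * f x ^+ k.
Proof. by rewrite rmorph_sum; apply: eq_bigr => k _; rewrite rmorphM rmorphXn. Qed.

Local Opaque Xw1 Xw2 Xw3 Xv1 Xv2 Xv3 Xwv.
Lemma E6_Xwv a1 a2 a3 b1 b2 b3 :
  E6 [:: a1; a2; a3; b1; b2; b3] (Xwv R) = a1 * b1 + a2 * b2 + a3 * b3.
Proof.
rewrite (f_Xwv (E6 [:: a1; a2; a3; b1; b2; b3])); congr (_ * _ + _ * _ + _ * _).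
- exact: E6_Xw1.
- exact: E6_Xv1.
- exact: E6_Xw2.
- exact: E6_Xv2.
- exact: E6_Xw3.
- exact: E6_Xv3.
Qed.

Lemma reduce (f : P) a1 a2 a3 b1 b2 b3 : translation_invariant f -> a1 != 0 ->
  E6 [:: a1; a2; a3; b1; b2; b3] f =
  E6 [:: a1; a2; a3; (a1 * b1 + a2 * b2 + a3 * b3) / a1; 0; 0] f.
Proof.
move=> Hf na; rewrite -!evE.
have := Hf 0 (- b3 / a1) (b2 / a1) a1 a2 a3 ((a1 * b1 + a2 * b2 + a3 * b3) / a1) 0 0.
have -> : - b3 / a1 * a3 - b2 / a1 * a2 + (a1 * b1 + a2 * b2 + a3 * b3) / a1 = b1 by field.
have -> : b2 / a1 * a1 - 0 * a3 + 0 = b2 by field.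
have -> : 0 * a2 - - b3 / a1 * a1 + 0 = b3 by field.
done.
Qed.

Lemma ev_g (f : P) a1 a2 a3 x : E6 [:: a1; a2; a3; x; 0; 0] f =
  (map_poly (EW3 [:: a1; a2; a3]) (phi 'X 0 0 f)).[x].
Proof. by apply: phi_ev; rewrite ?mapX ?hornerX ?rmorph0 ?horner0. Qed.

Lemma ev_h (f : P) a1 a2 a3 x : E6 [:: a1; a2; a3; 0; x; 0] f =
  (map_poly (EW3 [:: a1; a2; a3]) (phi 0 'X 0 f)).[x].
Proof. by apply: phi_ev; rewrite ?mapX ?hornerX ?rmorph0 ?horner0. Qed.

Lemma coef_rel (G H : {poly R}) c : (forall y, H.[y] = G.[c * y]) ->
  forall k, H`_k = G`_k * c ^+ k.
Proof.
move=> HG.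
have -> : H = \poly_(i < size G) (G`_i * c ^+ i).
  apply: poly_R_eq => y _; rewrite HG horner_poly horner_coef.
  by apply: eq_bigr => i _; rewrite exprMn mulrA.
move=> k; rewrite coef_poly; case: ltnP => // hk; by rewrite nth_default ?mul0r.
Qed.

Lemma div_X (g h : W) k : h * 'X^k = g * (('X : WF2 R) ^+ k)%:P -> g = drop_poly k g * 'X^k.
Proof.
move=> E.
have Hi : forall i, (i < k)%N -> g`_i = 0.
  move=> i ik; have := congr1 (fun p : W => p`_i) E; rewrite /= coefMXn ik coefMC => /esym/eqP.
  by rewrite mulf_eq0 expf_eq0 polyX_eq0 andbF orbF => /eqP.
rewrite -{1}(poly_take_drop k g).
suff -> : take_poly k g = 0 by rewrite add0r.
by apply/polyP => i; rewrite coef_take_poly coef0; case: ifP => // /Hi.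
Qed.

Lemma EW2_inj : Einj 2 (@EW2 R).
Proof. by do 2! apply: Estep_inj'; exact: (@E0_inj R). Qed.

Lemma EW3_X (c : R) e : EW3 (c :: e) 'X = c. Proof. exact: EstepX. Qed.
Lemma EW3_X2 (c a : R) e : EW3 [:: c, a & e] (('X : WF2 R)%:P) = a.
Proof. by rewrite /EW3 EstepC /EW2 EstepX. Qed.

Lemma EW3_MXn (x : W) (c : R) e k : EW3 (c :: e) (x * 'X^k) = EW3 (c :: e) x * c ^+ k.
Proof. by rewrite rmorphM rmorphXn EW3_X. Qed.

Lemma coefR (A B : nzSemiRingType) (f : {rmorphism A -> B}) (p : {poly A}) i :
  (map_poly f p)`_i = f p`_i.
Proof. exact: coef_map. Qed.

Lemma W_rel (g h : W) k :
  (forall a1 a2 a3, a1 != 0 ->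
     EW3 [:: a1; a2; a3] h * a1 ^+ k = EW3 [:: a1; a2; a3] g * a2 ^+ k) ->
  h * 'X^k = g * (('X : WF2 R) ^+ k)%:P.
Proof.
move=> H; apply: (Estep_inj EW2_inj) => c [|a2 [|a3 []]] //= _ nc.
change (EW3 [:: c; a2; a3] (h * 'X^k) = EW3 [:: c; a2; a3] (g * (('X : WF2 R) ^+ k)%:P)).
rewrite !rmorphM rmorphXn EW3_X {3}/EW3 EstepC rmorphXn /EW2 EstepX.
exact: H.
Qed.

Lemma size_map_le (A B : nzSemiRingType) (f : A -> B) (p : {poly A}) : (size (map_poly f p) <= size p)%N.
Proof. by rewrite map_polyE (leq_trans (size_Poly _)) // size_map. Qed.

Theorem structure (f : P) : translation_invariant f ->
  exists (N : nat) (F : nat -> W), f = \sum_(k < N) iotaW R (F k) * Xwv R ^+ k.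
Proof.
move=> Hf.
set g := phi 'X 0 0 f; set h := phi 0 'X 0 f.
have rel : forall k, h`_k * 'X^k = g`_k * (('X : WF2 R) ^+ k)%:P.
  move=> k; apply: W_rel => a1 a2 a3 na.
  have HG : forall y, (map_poly (EW3 [:: a1; a2; a3]) h).[y] =
                      (map_poly (EW3 [:: a1; a2; a3]) g).[a2 / a1 * y].
    move=> y; rewrite -ev_h -ev_g (reduce a2 a3 0 y 0 Hf na).
    have -> : (a1 * 0 + a2 * y + a3 * 0) / a1 = a2 / a1 * y by field.
    done.
  have := coef_rel HG k; rewrite !coef_map => ->.
  by rewrite -mulrA -exprMn divfK.
pose F k : W := drop_poly k g`_k.
have gF : forall k, g`_k = (F k * 'X^k : W) by move=> k; apply: div_X (rel k).
exists (size g), F.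
apply: (Estep_inj (n := 5) (E := @E5 R)).
  by do 5! apply: Estep_inj'; exact: (@E0_inj R).
move=> a1 [|a2 [|a3 [|b1 [|b2 [|b3 []]]]]] //= _ na1.
change (E6 [:: a1; a2; a3; b1; b2; b3] f =
        E6 [:: a1; a2; a3; b1; b2; b3] (\sum_(k < size g) iotaW R (F k) * Xwv R ^+ k)).
rewrite [RHS](f_sum (E6 _) (fun k => iotaW R (F k)) (Xwv R)) (reduce a2 a3 b1 b2 b3 Hf na1) ev_g.
rewrite (horner_coef_wide _ (size_map_le _ _)).
apply: eq_bigr => k _.
rewrite (E6_iota (F k) a1 a2 a3 [:: b1; b2; b3]) (E6_Xwv a1 a2 a3 b1 b2 b3).
rewrite coefR gF (EW3_MXn (F k) a1 [:: a2; a3] k).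
rewrite -mulrA -exprMn; congr (_ * _ ^+ _); by field.
Qed.
End F.

Fixpoint lexlt (s t : seq nat) : bool :=
  match s, t with
  | x :: s', y :: t' => (x < y)%N || ((x == y) && lexlt s' t')
  | _, _ => false
  end.

Lemma lex_total s t : size s = size t -> s != t -> lexlt s t || lexlt t s.
Proof.
elim: s t => [|x s IH] [|y t] //= [st] ne.
case: (ltngtP x y) => //= exy; subst y.
apply: IH => //.
by apply: contraNneq ne => ->.
Qed.

Lemma lexlt_irr s : lexlt s s = false.
Proof. by elim: s => //= x s ->; rewrite ltnn eqxx. Qed.

Definition lmS' (A : nzSemiRingType) (lmA : A -> seq nat) (p : {poly A}) : seq nat :=
  (size p).-1 :: lmA (lead_coef p).

Definition LP (A : nzSemiRingType) (lmA : A -> seq nat) :=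
  forall p q : A, p != 0 -> lexlt (lmA q) (lmA p) -> (p + q != 0) /\ lmA (p + q) = lmA p.

Definition MP (A : nzSemiRingType) (lmA : A -> seq nat) :=
  forall p q : A, p != 0 -> q != 0 -> (p * q != 0) /\ lmA (p * q) = mmul (lmA p) (lmA q).

Lemma LP_lift (A : nzSemiRingType) (lmA : A -> seq nat) : LP lmA -> LP (lmS' lmA).
Proof.
move=> LPA p q np; rewrite /lmS' /=.
have [->|nq] := eqVneq q 0; first by rewrite addr0.
have sp : (0 < size p)%N by rewrite size_poly_gt0.
have sq : (0 < size q)%N by rewrite size_poly_gt0.
case/orP => [lt|/andP [/eqP eqs lt]].
  have lt' : (size q < size p)%N.
    by move: lt; rewrite -(ltn_add2r 1) !addn1 !prednK.
  rewrite size_polyDl // lead_coefDl //; split => //.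
  by rewrite -size_poly_eq0 size_polyDl // -lt0n.
have eqs' : size q = size p by rewrite -(prednK sq) -(prednK sp) eqs.
have lp : lead_coef p != 0 by rewrite lead_coef_eq0.
have [nz hl] := LPA _ _ lp lt.
have hc : (p + q)`_(size p).-1 = lead_coef p + lead_coef q.
  by rewrite coefD /lead_coef eqs'.
have sz : size (p + q) = size p.
  apply/eqP; rewrite eqn_leq; apply/andP; split.
    by rewrite (leq_trans (size_polyD _ _)) // eqs' maxnn.
  rewrite -(prednK sp) ltnNge; apply/negP => /(nth_default 0) H.
  by move: nz; rewrite -hc [_`__]H eqxx.
have hl' : lead_coef (p + q) = lead_coef p + lead_coef q by rewrite /lead_coef sz -hc.
split; first by rewrite -size_poly_eq0 sz -lt0n.
by rewrite sz hl' hl.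
Qed.

Lemma mmul_cons x y s t : mmul (x :: s) (y :: t) = (x + y)%N :: mmul s t.
Proof. by []. Qed.

Lemma MP_lift (A : nzSemiRingType) (lmA : A -> seq nat) : MP lmA -> MP (lmS' lmA).
Proof.
move=> MPA p q np nq; rewrite /lmS'.
have lp : lead_coef p != 0 by rewrite lead_coef_eq0.
have lq : lead_coef q != 0 by rewrite lead_coef_eq0.
have [nz hl] := MPA _ _ lp lq.
have sp : (0 < size p)%N by rewrite size_poly_gt0.
have sq : (0 < size q)%N by rewrite size_poly_gt0.
rewrite size_proper_mul // lead_coef_proper_mul // hl; split.
  by rewrite -size_poly_eq0 size_proper_mul // -(prednK sp) -(prednK sq) addSn addnS.
rewrite mmul_cons; congr (_ :: _).
by rewrite -{1}(prednK sp) -{1}(prednK sq) addSn /= addnS.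
Qed.

Section LmR.
Variable R : realFieldType.
Lemma LP0 : LP (@lm0 R). Proof. by []. Qed.
Lemma MP0 : MP (@lm0 R).
Proof. by move=> p q np nq; split => //; rewrite mulf_neq0. Qed.
End LmR.

Lemma lm_sum (A : nzSemiRingType) (lmA : A -> seq nat) n0 (LPA : LP lmA)
  (szA : forall a, size (lmA a) = n0) (t : nat -> A) N
  (dist : forall i j, (i < j)%N -> (j < N)%N -> t i != 0 -> t j != 0 -> lmA (t i) != lmA (t j)) :
  \sum_(k < N) t k = 0 \/
  exists k, [/\ (k < N)%N, t k != 0, \sum_(k < N) t k != 0 & lmA (\sum_(k < N) t k) = lmA (t k)].
Proof.
elim: N dist => [|N IH] dist; first by left; rewrite big_ord0.
rewrite big_ord_recr /=.
have dist' : forall i j, (i < j)%N -> (j < N)%N -> t i != 0 -> t j != 0 -> lmA (t i) != lmA (t j).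
  by move=> i j ij jN; apply: dist => //; rewrite ltnS; exact: ltnW.
have [nt|nt] := eqVneq (t N) 0.
  rewrite nt addr0; case: (IH dist') => [->|[k [kN tk s0 hk]]]; first by left.
  right; exists k; split => //; rewrite ltnS; exact: ltnW.
case: (IH dist') => [->|[k [kN tk s0 hk]]].
  by right; exists N; split; rewrite ?add0r.
right.
have ne : lmA (\sum_(i < N) t i) != lmA (t N) by rewrite hk; apply: dist.
have := lex_total (etrans (szA _) (esym (szA (t N)))) ne; case/orP => lt.
  have [nz e] := LPA _ _ nt lt.
  by exists N; split => //; rewrite addrC.
have [nz e] := LPA _ _ s0 lt.
exists k; split => //; first by rewrite ltnS; exact: ltnW.
by rewrite e.
Qed.

Lemma lmC (A : nzSemiRingType) (lA : A -> seq nat) a : lmS' lA a%:P = 0%N :: lA a.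
Proof. by rewrite /lmS' size_polyC lead_coefC; case: (a != 0). Qed.
Lemma lmX (A : nzSemiRingType) (lA : A -> seq nat) : lmS' lA 'X = 1%N :: lA 1.
Proof. by rewrite /lmS' size_polyX lead_coefX. Qed.
Lemma lm1 (A : nzSemiRingType) (lA : A -> seq nat) : lmS' lA 1 = 0%N :: lA 1.
Proof. by rewrite /lmS' size_poly1 lead_coef1. Qed.

Lemma lmS'_map (A B : nzSemiRingType) (k : {rmorphism A -> B}) (lA : A -> seq nat)
  (lB : B -> seq nat) z : injective k -> (forall a, lB (k a) = lA a ++ z) ->
  forall p, lmS' lB (map_poly k p) = lmS' lA p ++ z.
Proof.
move=> ik H p; rewrite /lmS' size_map_inj_poly ?rmorph0 //.
by rewrite lead_coef_map_inj ?rmorph0 // H.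
Qed.

Lemma MP_exp (A : nzSemiRingType) (lA : A -> seq nat) : MP lA ->
  forall x : A, x != 0 -> 1 != 0 :> A -> forall k, x ^+ k != 0 /\ lA (x ^+ k) = iter k (mmul (lA x)) (lA 1).
Proof.
move=> M x nx n1; elim => [|k [nk ek]] /=; first by rewrite expr0.
by rewrite exprS; have [nz e] := M _ _ nx nk; rewrite e ek.
Qed.

Lemma polyind_clos (A B : nzSemiRingType) (phi : {rmorphism {poly A} -> B}) (G : B -> Prop) :
  (forall x y, G x -> G y -> G (x + y)) -> (forall x y, G x -> G y -> G (x * y)) ->
  G (phi 'X) -> (forall a, G (phi a%:P)) -> forall p, G (phi p).
Proof.
move=> GD GM GX GC; elim/poly_ind => [|p c IH]; first by have := GC 0; rewrite polyC0.
by rewrite rmorphD rmorphM; apply: GD; [apply: GM|].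
Qed.

Lemma clos_exp (B : pzSemiRingType) (G : B -> Prop) : G 1 ->
  (forall x y, G x -> G y -> G (x * y)) -> forall x k, G x -> G (x ^+ k).
Proof. by move=> G1 GM x k Gx; elim: k => [|k IH]; rewrite ?expr0 // exprS; apply: GM. Qed.

Lemma mem4 (T : eqType) (a b c d : T) :
  [/\ a \in [:: a; b; c; d], b \in [:: a; b; c; d], c \in [:: a; b; c; d] & d \in [:: a; b; c; d]].
Proof. by rewrite !inE !eqxx !orbT. Qed.

Lemma mulnz (A : nzSemiRingType) (p q : A) : p * q != 0 -> p != 0 /\ q != 0.
Proof. by split; apply: contraNneq H => ->; rewrite ?mul0r ?mulr0. Qed.

Section Final.
Variable R : realFieldType.
Local Notation P := (P6 R).
Local Notation W := (WW R).

Definition lq1 : T1 R -> seq nat := lmS' (@lm0 R).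
Definition lq2 : T2 R -> seq nat := lmS' (A := T1 R) lq1.
Definition lq3 : T3 R -> seq nat := lmS' (A := T2 R) lq2.
Definition lq4 : T4 R -> seq nat := lmS' (A := T3 R) lq3.
Definition lq5 : T5 R -> seq nat := lmS' (A := T4 R) lq4.
Definition lmP : P -> seq nat := lmS' (A := T5 R) lq5.
Definition lw1 : WF1 R -> seq nat := lmS' (@lm0 R).
Definition lw2 : WF2 R -> seq nat := lmS' (A := WF1 R) lw1.
Definition lmW : W -> seq nat := lmS' (A := WF2 R) lw2.

Lemma LP_P : LP lmP.
Proof. by do 6! apply: LP_lift; exact: LP0. Qed.
Lemma MP_P : MP lmP.
Proof. by do 6! apply: MP_lift; exact: MP0. Qed.
Lemma size_lmP p : size (lmP p) = 6%N. Proof. by []. Qed.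

Lemma lm_cross (f : P) : lm f = lmP f.
Proof. by []. Qed.

Lemma lq5_1 : lq5 1 = [:: 0; 0; 0; 0; 0]%N.
Proof. by rewrite /lq5 lm1 /lq4 lm1 /lq3 lm1 /lq2 lm1 /lq1 lm1. Qed.
Lemma lmP_1 : lmP 1 = [:: 0; 0; 0; 0; 0; 0]%N.
Proof. by rewrite /lmP lm1 lq5_1. Qed.

Lemma lmP_Xw1 : lmP (Xw1 R) = [:: 1; 0; 0; 0; 0; 0]%N.
Proof. by change (lmS' lq5 'X = [:: 1; 0; 0; 0; 0; 0]%N); rewrite lmX lq5_1. Qed.
Lemma lmP_Xw2 : lmP (Xw2 R) = [:: 0; 1; 0; 0; 0; 0]%N.
Proof.
change (lmS' lq5 ('X : T5 R)%:P = [:: 0; 1; 0; 0; 0; 0]%N).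
by rewrite lmC /lq5 lmX /lq4 lm1 /lq3 lm1 /lq2 lm1 /lq1 lm1.
Qed.
Lemma lmP_Xw3 : lmP (Xw3 R) = [:: 0; 0; 1; 0; 0; 0]%N.
Proof.
change (lmS' lq5 ('X : T4 R)%:P%:P = [:: 0; 0; 1; 0; 0; 0]%N).
by rewrite lmC /lq5 lmC /lq4 lmX /lq3 lm1 /lq2 lm1 /lq1 lm1.
Qed.
Lemma lmP_Xv1 : lmP (Xv1 R) = [:: 0; 0; 0; 1; 0; 0]%N.
Proof.
change (lmS' lq5 ('X : T3 R)%:P%:P%:P = [:: 0; 0; 0; 1; 0; 0]%N).
by rewrite lmC /lq5 lmC /lq4 lmC /lq3 lmX /lq2 lm1 /lq1 lm1.
Qed.
Lemma lmP_Xv2 : lmP (Xv2 R) = [:: 0; 0; 0; 0; 1; 0]%N.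
Proof.
change (lmS' lq5 ('X : T2 R)%:P%:P%:P%:P = [:: 0; 0; 0; 0; 1; 0]%N).
by rewrite lmC /lq5 lmC /lq4 lmC /lq3 lmC /lq2 lmX /lq1 lm1.
Qed.
Lemma lmP_Xv3 : lmP (Xv3 R) = [:: 0; 0; 0; 0; 0; 1]%N.
Proof.
change (lmS' lq5 ('X : T1 R)%:P%:P%:P%:P%:P = [:: 0; 0; 0; 0; 0; 1]%N).
by rewrite lmC /lq5 lmC /lq4 lmC /lq3 lmC /lq2 lmC /lq1 lmX.
Qed.

Lemma nz_ev (p : P) e : E6 e p != 0 -> p != 0.
Proof. by apply: contraNneq => ->; rewrite rmorph0. Qed.

Local Opaque Xw1 Xw2 Xw3 Xv1 Xv2 Xv3 Xwv.

Lemma nzX (x : P) : (forall e, E6 e x = nth 0 e 0 \/ E6 e x = nth 0 e 1 \/ E6 e x = nth 0 e 2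
   \/ E6 e x = nth 0 e 3 \/ E6 e x = nth 0 e 4 \/ E6 e x = nth 0 e 5) -> x != 0.
Proof.
move=> H; apply: (@nz_ev x [:: 1; 1; 1; 1; 1; 1]).
have := H [:: 1; 1; 1; 1; 1; 1].
by case=> [->|[->|[->|[->|[->|->]]]]]; exact: oner_neq0.
Qed.

Lemma lm_sum3 (x1 y1 x2 y2 x3 y3 : P) :
  x1 != 0 -> y1 != 0 -> x2 != 0 -> y2 != 0 -> x3 != 0 -> y3 != 0 ->
  lmP x1 = [:: 1; 0; 0; 0; 0; 0]%N -> lmP y1 = [:: 0; 0; 0; 1; 0; 0]%N ->
  lmP x2 = [:: 0; 1; 0; 0; 0; 0]%N -> lmP y2 = [:: 0; 0; 0; 0; 1; 0]%N ->
  lmP x3 = [:: 0; 0; 1; 0; 0; 0]%N -> lmP y3 = [:: 0; 0; 0; 0; 0; 1]%N ->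
  lmP (x1 * y1 + x2 * y2 + x3 * y3) = [:: 1; 0; 0; 1; 0; 0]%N.
Proof.
move=> n1 m1 n2 m2 n3 m3 l1 k1 l2 k2 l3 k3.
have [z1 e1] := MP_P n1 m1; have [z2 e2] := MP_P n2 m2; have [z3 e3] := MP_P n3 m3.
rewrite l1 k1 in e1; rewrite l2 k2 in e2; rewrite l3 k3 in e3.
have lt12 : lexlt (lmP (x2 * y2)) (lmP (x1 * y1)) by rewrite e1 e2.
have [z12 e12] := LP_P z1 lt12.
have lt123 : lexlt (lmP (x3 * y3)) (lmP (x1 * y1 + x2 * y2)) by rewrite e12 e1 e3.
have [z123 e123] := LP_P z12 lt123.
by rewrite e123 e12 e1.
Qed.

Lemma Xw1_nz : Xw1 R != 0. Proof. by apply: nzX => e; left; rewrite E6_Xw1; case: e. Qed.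
Lemma Xw2_nz : Xw2 R != 0. Proof. by apply: nzX => e; right; left; rewrite E6_Xw2; case: e => [|? []]. Qed.
Lemma Xw3_nz : Xw3 R != 0. Proof. by apply: nzX => e; do 2 right; left; rewrite E6_Xw3; case: e => [|? [|? []]]. Qed.
Lemma Xv1_nz : Xv1 R != 0. Proof. by apply: nzX => e; do 3 right; left; rewrite E6_Xv1. Qed.
Lemma Xv2_nz : Xv2 R != 0. Proof. by apply: nzX => e; do 4 right; left; rewrite E6_Xv2. Qed.
Lemma Xv3_nz : Xv3 R != 0. Proof. by apply: nzX => e; do 5 right; rewrite E6_Xv3. Qed.

Lemma lmP_Xwv : lmP (Xwv R) = [:: 1; 0; 0; 1; 0; 0]%N.
Proof.
Local Transparent Xwv.
exact: (lm_sum3 Xw1_nz Xv1_nz Xw2_nz Xv2_nz Xw3_nz Xv3_nz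
          lmP_Xw1 lmP_Xv1 lmP_Xw2 lmP_Xv2 lmP_Xw3 lmP_Xv3).
Qed.
End Final.

Section J.
Variable R : realFieldType.
Local Notation P := (P6 R).
Local Notation W := (WW R).
Local Notation S := [:: Xw1 R; Xw2 R; Xw3 R; Xwv R].

Lemma iota3_inj : injective (iota3 R).
Proof. by move=> a b; rewrite !iota3E => /polyC_inj/polyC_inj/polyC_inj. Qed.
Lemma iota4_inj : injective (iota4 R).
Proof. by move=> a b; rewrite !iota4E => /(map_inj_poly iota3_inj (rmorph0 _)). Qed.
Lemma iota5_inj : injective (iota5 R).
Proof. by move=> a b; rewrite !iota5E => /(map_inj_poly iota4_inj (rmorph0 _)). Qed.

Lemma lq3_iota a : lq3 (iota3 R a) = lm0 a ++ [:: 0; 0; 0]%N.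
Proof. by rewrite iota3E /lq3 lmC /lq2 lmC /lq1 lmC. Qed.
Lemma lq4_iota a : lq4 (iota4 R a) = lw1 a ++ [:: 0; 0; 0]%N.
Proof. by rewrite iota4E; exact: (lmS'_map iota3_inj lq3_iota a). Qed.
Lemma lq5_iota a : lq5 (iota5 R a) = lw2 a ++ [:: 0; 0; 0]%N.
Proof. by rewrite iota5E; exact: (lmS'_map iota4_inj lq4_iota a). Qed.
Lemma lmP_iota q : lmP (iotaW R q) = lmW q ++ [:: 0; 0; 0]%N.
Proof. by rewrite iotaWE; exact: (lmS'_map iota5_inj lq5_iota q). Qed.

Lemma e0 : (0 : R)%:P%:P%:P%:P%:P%:P = 0 :> P.
Proof.
exact: (etrans (congr1 (@polyC _) (etrans (congr1 (@polyC _) (etrans (congr1 (@polyC _)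
  (etrans (congr1 (@polyC _) (etrans (congr1 (@polyC _) (polyC0 _)) (polyC0 _))) (polyC0 _)))
  (polyC0 _))) (polyC0 _))) (polyC0 _)).
Qed.
Lemma e1 : (1 : R)%:P%:P%:P%:P%:P%:P = 1 :> P.
Proof.
exact: (etrans (congr1 (@polyC _) (etrans (congr1 (@polyC _) (etrans (congr1 (@polyC _)
  (etrans (congr1 (@polyC _) (etrans (congr1 (@polyC _) (polyC1 _)) (polyC1 _))) (polyC1 _)))
  (polyC1 _))) (polyC1 _))) (polyC1 _)).
Qed.
Lemma gen0 : generated S 0.
Proof. rewrite -e0; exact: gen_const. Qed.
Lemma gen1 : generated S 1.
Proof. rewrite -e1; exact: gen_const. Qed.

Lemma gen_iota q : generated S (iotaW R q).
Proof.
have [m1 m2 m3 m4] := mem4 (Xw1 R) (Xw2 R) (Xw3 R) (Xwv R).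
apply: (polyind_clos (phi := iotaW R) (G := generated S)).
- by move=> x y; exact: gen_add.
- by move=> x y; exact: gen_mul.
- by rewrite iotaW_X1; exact: gen_elem.
move=> a; rewrite iotaWE mapC.
apply: (polyind_clos (phi := iota5 R) (G := fun y => generated S y%:P)).
- by move=> x y Hx Hy; rewrite polyCD; exact: gen_add.
- by move=> x y Hx Hy; rewrite polyCM; exact: gen_mul.
- by rewrite iota5E mapX; exact: gen_elem.
move=> b; rewrite iota5E mapC.
apply: (polyind_clos (phi := iota4 R) (G := fun z => generated S z%:P%:P)).
- by move=> x y Hx Hy; rewrite !polyCD; exact: gen_add.
- by move=> x y Hx Hy; rewrite !polyCM; exact: gen_mul.
- by rewrite iota4E mapX; exact: gen_elem.
by move=> c; rewrite iota4E mapC iota3E; exact: gen_const.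
Qed.

Lemma inv_gen s : s \in S -> translation_invariant s.
Proof.
rewrite !inE => /or4P [] /eqP -> r1 r2 r3 a1 a2 a3 b1 b2 b3; rewrite !evE.
- by rewrite !E6_Xw1.
- by rewrite !E6_Xw2.
- by rewrite !E6_Xw3.
- by rewrite !E6_Xwv; ring.
Qed.
End J.

Lemma foldr_nseq c (u r : seq nat) s :
  foldr mmul r (nseq c u ++ s) = iter c (mmul u) (foldr mmul r s).
Proof. by elim: c => //= c ->. Qed.

Lemma addRN (x y : nat) : (x + y)%R = (x + y)%N. Proof. by []. Qed.

Lemma zeroRN : (0%R : nat) = 0%N. Proof. by []. Qed.
Lemma foldr_nseq0 c (u r : seq nat) : foldr mmul r (nseq c u) = iter c (mmul u) r.
Proof. by elim: c => //= c ->. Qed.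

Lemma iter6 c u1 u2 u3 u4 u5 u6 x1 x2 x3 x4 x5 x6 :
  iter c (mmul [:: u1; u2; u3; u4; u5; u6]) [:: x1; x2; x3; x4; x5; x6] =
  [:: c * u1 + x1; c * u2 + x2; c * u3 + x3; c * u4 + x4; c * u5 + x5; c * u6 + x6]%N.
Proof.
elim: c => [|c IH] /=; first by rewrite !mul0n !add0n.
rewrite IH /mmul /= !addRN; congr [:: _; _; _; _; _; _]; by rewrite mulSn addnA.
Qed.

Section K.
Variable R : realFieldType.
Local Notation P := (P6 R).
Local Notation W := (WW R).
Local Notation S := [:: Xw1 R; Xw2 R; Xw3 R; Xwv R].
Local Opaque Xw1 Xw2 Xw3 Xv1 Xv2 Xv3 Xwv.

Lemma Xwv_nz : Xwv R != 0.
Proof.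
apply: (@nz_ev R _ [:: 1; 0; 0; 1; 0; 0]); rewrite E6_Xwv.
by rewrite mulr1 !mulr0 !addr0 oner_neq0.
Qed.

Lemma lmW3 (q : W) : exists c1 c2 c3, lmW q = [:: c1; c2; c3].
Proof. by rewrite /lmW /lmS' /lw2 /lmS' /lw1 /lmS'; do 3 eexists. Qed.

Lemma lm_term (q : W) k : iotaW R q * Xwv R ^+ k != 0 ->
  exists c1 c2 c3, lmP (iotaW R q * Xwv R ^+ k) = [:: c1 + k; c2; c3; k; 0; 0]%N.
Proof.
move=> tk; have [n1 n2] := mulnz tk.
have [_ ex] := MP_exp (@MP_P R) Xwv_nz (oner_neq0 _) k.
have [_ e] := MP_P n1 n2.
have [c1 [c2 [c3 ec]]] := lmW3 q.
exists c1, c2, c3.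
rewrite e ex lmP_Xwv lmP_1 lmP_iota ec iter6 /= /mmul /= !addRN.
by rewrite !muln1 !muln0 !addn0 !add0n.
Qed.

Theorem main_sagbi : sagbi_basis (@translation_invariant R) S.
Proof.
split; first exact: inv_gen.
move=> f Hf nf.
have [N [F Ef]] := structure Hf.
pose t k := iotaW R (F k) * Xwv R ^+ k.
have Ef' : f = \sum_(k < N) t k := Ef.
have dist : forall i j, (i < j)%N -> (j < N)%N -> t i != 0 -> t j != 0 -> lmP (t i) != lmP (t j).
  move=> i j ij _ ti tj.
  have [a1 [a2 [a3 ei]]] := lm_term ti; have [b1 [b2 [b3 ej]]] := lm_term tj.
  rewrite /t ei ej; apply/eqP => [[_ _ _ eij]]; by rewrite eij ltnn in ij.
case: (lm_sum (@LP_P R) (@size_lmP R) dist) => [s0|[k [kN tk _ ek]]].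
  by move: nf; rewrite Ef' s0 eqxx.
have [c1 [c2 [c3 ec]]] := lm_term tk.
exists (nseq c1 (Xw1 R) ++ nseq c2 (Xw2 R) ++ nseq c3 (Xw3 R) ++ nseq k (Xwv R)).
have [m1 m2 m3 m4] := mem4 (Xw1 R) (Xw2 R) (Xw3 R) (Xwv R).
split; first by rewrite !all_cat !all_nseq m1 m2 m3 m4 !orbT.
rewrite lm_cross Ef' ek ec (eq_map (@lm_cross R)) !map_cat !map_nseq.
rewrite lmP_Xw1 lmP_Xw2 lmP_Xw3 lmP_Xwv !foldr_nseq foldr_nseq0 /mone /= !zeroRN !iter6.
by rewrite !muln1 !muln0 !addn0 !add0n.
Qed.

Theorem main_gen (f : P) : translation_invariant f -> generated S f.
Proof.
move=> Hf; have [N [F ->]] := structure Hf.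
have [m1 m2 m3 m4] := mem4 (Xw1 R) (Xw2 R) (Xw3 R) (Xwv R).
apply: big_ind => [|x y|k _]; first exact: gen0.
  exact: gen_add.
apply: gen_mul; first exact: gen_iota.
apply: clos_exp; first exact: gen1.
  by move=> x y; exact: gen_mul.
exact: gen_elem.
Qed.
End K.

Theorem mainTheorem2 (R : realFieldType) :
  sagbi_basis (@translation_invariant R) [:: Xw1 R; Xw2 R; Xw3 R; Xwv R] /\
  (forall f : P6 R, translation_invariant f -> generated [:: Xw1 R; Xw2 R; Xw3 R; Xwv R] f).
Proof. split; [exact: main_sagbi | exact: main_gen]. Qed.
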